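(* Let $A,\xi_0>0$, $0<\alpha<\frac12$, and let $\{w_n\}_{n\ge0}$ be functions $w_n\colon(0,\xi_0]\to[0,1]$ with $w_{n+1}(\xi)\le w_n(\xi)$ for all $n,\xi$. If $w_{n+k}(\xi)\le4(1-A\xi^2)^kw_n(\xi)$ for all $\xi\in(0,\xi_0]$ and all integers $k,n\ge0$, then the sequence $$s_n=\sup\{w_n(\xi):\ n^{-\alpha}\le\xi\le\xi_0\}$$ decays rapidly in $n$.
   Context: A sequence $\{s_n\}$ decays rapidly in $n$ if for each $\ell\ge1$ there is $C$ with $|s_n|\le Cn^{-\ell}$ for all $n\ge1$ (a supremum over the empty set is taken to be $0$). *)

(* Defs.v *)
From Stdlib Require Import Reals.
From Coquelicot Require Import Coquelicot.
Open Scope R_scope.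

Definition decays_rapidly (s : nat -> R) : Prop :=
  forall l : nat, (1 <= l)%nat ->
    exists C : R, forall n : nat, (1 <= n)%nat ->
      Rabs (s n) <= C * Rpower (INR n) (- INR l).

(* s_n = sup { w_n(xi) : n^(-alpha) <= xi <= xi0 }.
   Lub_Rbar of the empty set is m_infty and [real m_infty = 0], so the
   supremum over the empty set is 0, as in the paper's convention. *)
Definition sup_tail (w : nat -> R -> R) (alpha xi0 : R) (n : nat) : R :=
  real (Lub_Rbar (fun y => exists xi,
          Rpower (INR n) (- alpha) <= xi <= xi0 /\ y = w n xi)).

(* Main.v *)
Require Import Defs.
From Stdlib Require Import Reals.
From Coquelicot Require Import Coquelicot.
From Stdlib Require Import Lra Lia Classical.
Open Scope R_scope.

Lemma lub_bound (E : R -> Prop) (B : R) :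
  0 <= B -> (forall y, E y -> 0 <= y <= B) -> Rabs (real (Lub_Rbar E)) <= B.
Proof.
  intros HB HE.
  destruct (Lub_Rbar_correct E) as [Hub Hlub].
  assert (Hle : Rbar_le (Lub_Rbar E) (Finite B)).
  { apply Hlub. intros x Ex. simpl. apply HE; auto. }
  destruct (classic (exists y, E y)) as [[y Ey]|Hne].
  - pose proof (Hub y Ey) as Hy.
    destruct (Lub_Rbar E) as [r| |]; simpl in *; try contradiction.
    pose proof (HE y Ey). rewrite Rabs_right; lra.
  - destruct (Lub_Rbar E) as [r| |]; simpl in *; try contradiction.
    + exfalso.
      assert (H : r <= r - 1).
      { apply (Hlub (Finite (r-1))). intros x Ex. exfalso; apply Hne; eauto. }
      lra.
    + rewrite Rabs_R0; lra.
Qed.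

Lemma exp_pow_n (x : R) (m : nat) : exp x ^ m = exp (INR m * x).
Proof.
  rewrite <- Rpower_pow by apply exp_pos. unfold Rpower. rewrite ln_exp. reflexivity.
Qed.

Lemma exp_lower (y : R) (m : nat) : 0 <= y -> (1 <= m)%nat -> (y / INR m) ^ m <= exp y.
Proof.
  intros Hy Hm.
  assert (HM : 0 < INR m) by (apply lt_0_INR; lia).
  replace (exp y) with (exp (y / INR m) ^ m).
  2:{ rewrite exp_pow_n. f_equal. field. lra. }
  apply pow_incr. split.
  - apply Rdiv_le_0_compat; lra.
  - pose proof (exp_ineq1_le (y / INR m)).
    assert (0 <= y / INR m) by (apply Rdiv_le_0_compat; lra). lra.
Qed.

Lemma key (A beta l N : R) (m : nat) :
  0 < A -> 1 <= N -> (1 <= m)%nat -> l <= INR m * beta ->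
  exp (- (A * Rpower N beta)) <= (INR m / A) ^ m * Rpower N (- l).
Proof.
  intros HA HN Hm Hl.
  assert (HM : 0 < INR m) by (apply lt_0_INR; lia).
  assert (HP : 0 < Rpower N beta) by apply exp_pos.
  assert (HPl : 0 < Rpower N l) by apply exp_pos.
  set (y := A * Rpower N beta).
  assert (Hy : 0 < y) by (unfold y; nra).
  pose proof (exp_lower y m (Rlt_le _ _ Hy) Hm) as He.
  assert (Heq : (y / INR m) ^ m = (A / INR m) ^ m * Rpower N (INR m * beta)).
  { unfold y. rewrite (Rmult_comm (INR m) beta), <- Rpower_mult, Rpower_pow by exact HP.
    unfold Rdiv. rewrite !Rpow_mult_distr. ring. }
  assert (Hc : 0 < (A / INR m) ^ m) by (apply pow_lt; apply Rdiv_lt_0_compat; lra).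
  assert (Hmono : Rpower N l <= Rpower N (INR m * beta)) by (apply Rle_Rpower; lra).
  assert (Hlow : (A / INR m) ^ m * Rpower N l <= exp y) by nra.
  rewrite exp_Ropp, Rpower_Ropp.
  replace ((INR m / A) ^ m) with (/ (A / INR m) ^ m).
  2:{ rewrite <- pow_inv. f_equal. field. lra. }
  rewrite <- Rinv_mult.
  apply Rinv_le_contravar; [nra | exact Hlow].
Qed.
Theorem proposition7p4 (A xi0 alpha : R) (w : nat -> R -> R) :
  0 < A -> 0 < xi0 -> 0 < alpha < 1/2 ->
  (forall n xi, 0 < xi <= xi0 -> 0 <= w n xi <= 1) ->
  (forall n xi, 0 < xi <= xi0 -> w (S n) xi <= w n xi) ->
  (forall xi k n, 0 < xi <= xi0 ->
     w (n + k)%nat xi <= 4 * (1 - A * xi ^ 2) ^ k * w n xi) ->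
  decays_rapidly (sup_tail w alpha xi0).
Proof.
  intros HA Hxi0 Ha Hw01 Hmon Hdec l Hl.
  set (beta := 1 - 2 * alpha).
  assert (Hb : 0 < beta) by (unfold beta; lra).
  assert (Hlb : 0 <= INR l / beta) by (apply Rdiv_le_0_compat; [apply pos_INR | lra]).
  destruct (nfloor_ex _ Hlb) as [m0 [_ Hm0]].
  set (m := S m0).
  assert (Hm : (1 <= m)%nat) by (unfold m; lia).
  assert (Hml : INR l <= INR m * beta).
  { unfold m. rewrite S_INR.
    assert (INR l = INR l / beta * beta) by (field; lra). nra. }
  exists (4 * (INR m / A) ^ m).
  intros n Hn.
  set (N := INR n).
  assert (HN : 1 <= N) by (unfold N; apply (le_INR 1); exact Hn).
  set (B := 4 * exp (- (A * Rpower N beta))).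
  apply Rle_trans with B.
  2:{ unfold B. rewrite Rmult_assoc. apply Rmult_le_compat_l; [lra|].
      apply key; auto. }
  unfold sup_tail. apply lub_bound.
  { unfold B. pose proof (exp_pos (- (A * Rpower N beta))). lra. }
  intros y [xi [[Ht Hx] ->]].
  fold N in Ht. set (t := Rpower N (- alpha)) in *.
  assert (Htp : 0 < t) by apply exp_pos.
  assert (Hxi : 0 < xi <= xi0) by lra.
  split; [apply Hw01; auto|].
  assert (HBp : 0 <= B) by (unfold B; pose proof (exp_pos (- (A * Rpower N beta))); lra).
  destruct (Rlt_or_le (1 - A * xi ^ 2) 0) as [Hneg|Hpos].
  - destruct n as [|n']; [lia|].
    pose proof (Hdec xi 1%nat n' Hxi) as H1.
    rewrite Nat.add_1_r in H1.
    pose proof (Hw01 n' xi Hxi). simpl in H1. nra.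
  - pose proof (Hdec xi n 0%nat Hxi) as H1. simpl (0 + n)%nat in H1.
    pose proof (Hw01 0%nat xi Hxi) as H0.
    assert (Hp : 0 <= (1 - A * xi ^ 2) ^ n) by (apply pow_le; lra).
    assert (Ht2 : t ^ 2 <= xi ^ 2) by (apply pow_incr; lra).
    assert (Hteq : t ^ 2 = Rpower N (-2 * alpha)).
    { unfold t. rewrite <- Rpower_pow by apply exp_pos. rewrite Rpower_mult.
      f_equal. simpl. ring. }
    set (x := A * Rpower N (-2 * alpha)).
    assert (Hxx : 1 - A * xi ^ 2 <= 1 - x) by (unfold x; rewrite <- Hteq; nra).
    assert (Hnx : INR n * - x = - (A * Rpower N beta)).
    { unfold x, beta. fold N.
      replace (Rpower N (1 - 2 * alpha)) with (Rpower N 1 * Rpower N (-2 * alpha)).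
      2:{ rewrite <- Rpower_plus. f_equal. ring. }
      rewrite Rpower_1 by lra. ring. }
    assert (H2 : (1 - A * xi ^ 2) ^ n <= exp (- x) ^ n).
    { apply pow_incr. split; [lra|]. pose proof (exp_ineq1_le (- x)). lra. }
    rewrite exp_pow_n, Hnx in H2.
    unfold B. nra.
Qed.
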